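(* Let $n\ge 1$ and consider the continuous-time networked SAIR(S) system: for each $i\in\{1,\dots,n\}$, \begin{align*} \dot{s}_{i}(t)&=-\beta_{i} s_{i}(t) \sum_{j=1}^n W_{ij}\big( a_{j}(t)+ p_{j}(t)\big)+\delta_{i} r_{i}(t),\\ \dot{a}_{i}(t)&=q\beta_{i} s_{i}(t) \sum_{j=1}^n W_{ij}\big( a_{j}(t)+ p_{j}(t)\big)-\sigma_{i} a_{i}(t)-\kappa_{i}a_{i}(t),\\ \dot{p}_{i}(t)&=(1-q)\beta_{i} s_{i}(t) \sum_{j=1}^n W_{ij}\big( a_{j}(t)+ p_{j}(t)\big)+\sigma_{i} a_{i}(t)-\gamma_{i} p_{i}(t),\\ \dot{r}_{i}(t)&=\kappa_{i} a_{i}(t)+\gamma_{i} p_{i}(t)-\delta_{i} r_{i}(t), \end{align*} where for all $i,j\in\{1,\dots,n\}$ we have $\beta_i,\gamma_i,\delta_i,\sigma_i,\kappa_i,W_{ij}\ge 0$ and $0\le q\le 1$. Suppose that $s_i(0),a_i(0),p_i(0),r_i(0)\in[0,1]$ and $s_i(0)+a_i(0)+p_i(0)+r_i(0)=1$ for all $i$. Then for all $t\ge 0$ and all $i\in\{1,\dots,n\}$, $s_i(t),a_i(t),p_i(t),r_i(t)\in[0,1]$ and $s_i(t)+a_i(t)+p_i(t)+r_i(t)=1$.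
   Context: The variables $s_i,a_i,p_i,r_i$ are the proportions of subpopulation $i$ that are susceptible, asymptomatic-infected, symptomatic-infected and recovered; $W=[W_{ij}]$ is the adjacency matrix of the interconnection network; $\beta_i$ is the transmission rate, $\sigma_i$ the asymptomatic-to-symptomatic progression rate, $\kappa_i,\gamma_i$ the recovery rates of asymptomatic and symptomatic infected, $\delta_i$ the rate of loss of immunity, and $q$ the proportion of new infections that are asymptomatic. *)

(* Defs.v *)
From HB Require Import structures.
From mathcomp Require Import all_boot all_order all_algebra.
From mathcomp Require Import all_classical all_reals all_analysis.
Set Implicit Arguments. Unset Strict Implicit. Unset Printing Implicit Defensive.
Import Order.TTheory GRing.Theory Num.Theory.
Import numFieldNormedType.Exports.
Local Open Scope ring_scope.

Definition pressure (R : realType) (n : nat) (W : 'I_n -> 'I_n -> R)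
  (a p : 'I_n -> R -> R) (i : 'I_n) (t : R) : R :=
  \sum_(j < n) W i j * (a j t + p j t).

(* Main.v *)
Require Import Defs.
From HB Require Import structures.
From mathcomp Require Import all_boot all_order all_algebra.
From mathcomp Require Import all_classical all_reals all_analysis.
Import Order.TTheory GRing.Theory Num.Theory.
Import numFieldNormedType.Exports.
Local Open Scope ring_scope.
From mathcomp Require Import ring lra.

Section Helpers.
Local Set Implicit Arguments.
Local Unset Strict Implicit.
Local Open Scope classical_set_scope.

Lemma deriv_left (R : realType) (f : R -> R) (x d : R) : is_derive x 1 f d -> 0 < d ->
  exists2 e, 0 < e & forall h, 0 < h < e -> f (x - h) < f x.
Proof.
move=> [Dd Dv] d0.
have C : (fun h : R => h^-1 *: ((f \o shift x) (h *: 1) - f x)) @ 0^' --> d.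
  rewrite -Dv. exact: Dd.
have H := @cvgr_gt _ _ _ _ _ d C 0 d0.
have {}H := H (dnbhs_filter _). rewrite near_withinE in H. have := (nbhs_ballP (0:R) _).1 H. case=> e /= e0 He.
exists e => // h /andP [h0 he].
have hb : ball (0:R) e (- h) by rewrite /ball /= sub0r opprK gtr0_norm.
have := He (- h) hb; rewrite oppr_eq0 gt_eqF // => /(_ isT).
rewrite /= -[(- h)%:A]/(- h * 1) mulr1 addrC.
rewrite invrN scaleNr oppr_gt0.
rewrite -[h^-1 *: _]/(h^-1 * _) pmulr_rlt0 ?invr_gt0 // addrC => P.
by rewrite addrC -subr_lt0.
Qed.

Lemma near_ball (R : realType) (P : R -> Prop) (x : R) :
  (\forall u \near x, P u) -> exists2 e, 0 < e & forall u, `|x - u| < e -> P u.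
Proof.
move=> H; have := (nbhs_ballP x _).1 H; case=> e /= e0 He.
by exists e => // u hu; apply: He.
Qed.

Lemma barrier (R : realType) (I : finType) (f : I -> R -> R) (T : R) :
  0 <= T ->
  (forall k t, 0 <= t <= T -> {for t, continuous (f k)}) ->
  (forall k, 0 < f k 0) ->
  (forall k tau, 0 < tau <= T -> (forall j u, 0 <= u < tau -> 0 < f j u) ->
     (forall j, 0 <= f j tau) -> f k tau = 0 -> exists2 d, is_derive tau 1 (f k) d & 0 < d) ->
  forall k t, 0 <= t <= T -> 0 < f k t.
Proof.
move=> T0 Hc H0 Hd.
pose A := [set t | 0 <= t <= T /\ forall j u, 0 <= u <= t -> 0 < f j u].
have A0 : A 0.
  split; first by rewrite lexx T0.
  by move=> j u /andP[u0 u0']; have -> : u = 0 by apply/le_anti; rewrite u0 u0'.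
have ubA : ubound A T by move=> t [/andP[_ ->]].
have hsA : has_sup A by split; [exists 0 | exists T].
set tau := sup A.
have tau0 : 0 <= tau by apply: sup_upper_bound.
have tauT : tau <= T by apply: ge_sup => //; exists 0.
have key : forall j u, 0 <= u < tau -> 0 < f j u.
  move=> j u /andP[u0 ut].
  have tu : 0 < tau - u by rewrite subr_gt0.
  have [a Aa ua] := sup_adherent tu hsA.
  rewrite opprB addrCA subrr addr0 in ua.
  by case: Aa => _ /(_ j u); apply; rewrite u0 ltW.
have cont j : {for tau, continuous (f j)} by apply: Hc; rewrite tau0 tauT.
have nneg : forall j, 0 <= f j tau.
  move=> j; rewrite leNgt; apply/negP => neg.
  have [e e0 He] := near_ball (cvgr_lt _ (cont j) _ neg).
  have tpos : 0 < tau.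
    rewrite lt_neqAle tau0 andbT; apply/negP => /eqP t0.
    by move: neg; rewrite -t0 ltNge (ltW (H0 j)).
  pose u := tau - Num.min e tau / 2.
  have hm : 0 < Num.min e tau by rewrite lt_min e0 tpos.
  have hm1 : Num.min e tau <= e by rewrite ge_min lexx.
  have hm2 : Num.min e tau <= tau by rewrite ge_min lexx orbT.
  have : 0 < f j u by apply: key; rewrite /u; apply/andP; split; lra.
  have : f j u < 0 by apply: He; rewrite /u opprB addrC subrK ger0_norm; lra.
  lra.
have pos : forall j, 0 < f j tau.
  move=> j; rewrite lt_neqAle nneg andbT; apply/negP => /eqP fz.
  have tpos : 0 < tau.
    rewrite lt_neqAle tau0 andbT; apply/negP => /eqP t0.
    move: (H0 j); have -> : f j 0 = f j tau by rewrite t0.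
    by rewrite -fz ltxx.
  have [d Dd d0] := Hd j tau (introT andP (conj tpos tauT)) key nneg (esym fz).
  have [e e0 He] := deriv_left Dd d0.
  pose h := Num.min e tau / 2.
  have hm : 0 < Num.min e tau by rewrite lt_min e0 tpos.
  have hm1 : Num.min e tau <= e by rewrite ge_min lexx.
  have hm2 : Num.min e tau <= tau by rewrite ge_min lexx orbT.
  have : f j (tau - h) < f j tau by apply: He; rewrite /h; apply/andP; split; lra.
  have : 0 < f j (tau - h) by apply: key; rewrite /h; apply/andP; split; lra.
  rewrite -fz; lra.
have tauT' : tau = T.
  apply/le_anti; rewrite tauT /=; rewrite leNgt; apply/negP => tT.
  have : \forall u \near tau, forall j, 0 < f j u.
    apply: (@filter_forall R I (fun j u => 0 < f j u) (nbhs tau) _) => j.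
    exact: (cvgr_gt _ (cont j) _ (pos j)).
  move=> Hn; have [e e0 He] := near_ball Hn.
  pose t' := Num.min (tau + e / 2) T.
  have t'1 : t' <= tau + e / 2 by rewrite ge_min lexx.
  have t'2 : t' <= T by rewrite ge_min lexx orbT.
  have t'3 : tau < t' by rewrite lt_min tT andbT; lra.
  have : A t'.
    split; first by apply/andP; split; lra.
    move=> j u /andP[u0 ut'].
    case: (ltP u tau) => ut; first by apply: key; rewrite u0 ut.
    by apply: He; rewrite ler0_norm; lra.
  move=> /(sup_upper_bound hsA); rewrite -/tau; lra.
move=> k t /andP[t0 tT].
case: (ltP t tau) => tt; first by apply: key; rewrite t0 tt.
have -> : t = tau by apply/le_anti; rewrite tt tauT' tT.
exact: pos.
Qed.

Lemma is_derive_pert (R : realType) (g : R -> R) (x dg eps M : R) :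
  is_derive x 1 g dg ->
  is_derive x 1 (fun t => g t + eps * expR (M * t)) (dg + eps * (M * expR (M * x))).
Proof.
move=> Dg.
have D1 : is_derive x 1 (fun t : R => M * t) M.
  have H := is_deriveZ M (@is_derive_id _ _ x 1).
  have E : M%:A = M :> R by rewrite /GRing.scale /= mulr1.
  rewrite E in H. exact H.
have D2 : is_derive x 1 (fun t : R => expR (M * t)) (expR (M * x) * M).
  exact: (@is_derive1_comp _ expR (fun t => M * t) x _ _ (is_derive_expR _) D1).
have D3 : is_derive x 1 (fun t : R => eps * expR (M * t)) (eps *: (expR (M * x) * M)).
  exact: (is_deriveZ eps D2).
have H := is_deriveD Dg D3.
have E : dg + eps *: (expR (M * x) * M) = dg + eps * (M * expR (M * x)).
  by rewrite [expR _ * M]mulrC.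
rewrite E in H. exact H.
Qed.

Lemma sP_bound (R : realType) (s P e w : R) : -e <= s -> s <= 4 ->
  -(2*e*w) <= P -> P <= 8*w -> 0 <= e -> e <= 1 -> 0 <= w -> -(8*w*e) <= s * P.
Proof.
move=> h1 h2 h3 h4 h5 h6 h7.
case: (lerP 0 s) => hs.
  have : s * (P + 2*e*w) >= 0 by apply: mulr_ge0; lra.
  have : (4 - s) * (2*e*w) >= 0 by apply: mulr_ge0; [lra| apply: mulr_ge0; lra].
  nra.
case: (lerP 0 P) => hP.
  have : (s + e) * P >= 0 by apply: mulr_ge0; lra.
  have : e * (8*w - P) >= 0 by apply: mulr_ge0; lra.
  nra.
have : s * P >= 0 by rewrite mulr_le0 ?ltW.
nra.
Qed.

Lemma comp_bound (R : realType) (beta gamma delta sigma kappa q w e P sv av pv rv : R) :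
  0 <= beta -> 0 <= gamma -> 0 <= delta -> 0 <= sigma -> 0 <= kappa ->
  0 <= q -> q <= 1 -> 0 <= w -> 0 < e -> e <= 1 ->
  -e <= sv -> sv <= 4 -> -e <= av -> av <= 4 -> -e <= pv -> pv <= 4 -> -e <= rv -> rv <= 4 ->
  -(2*e*w) <= P -> P <= 8*w ->
  let C := 8 * beta * w + delta + sigma + kappa + gamma in
  [/\ sv = -e -> - (C * e) <= - beta * sv * P + delta * rv,
      av = -e -> - (C * e) <= q * beta * sv * P - sigma * av - kappa * av,
      pv = -e -> - (C * e) <= (1 - q) * beta * sv * P + sigma * av - gamma * pv
    & rv = -e -> - (C * e) <= kappa * av + gamma * pv - delta * rv].
Proof.
move=> hb hg hd hs hk hq0 hq1 hw he0 he1 s1 s2 a1 a2 p1 p2 r1 r2 P1 P2 C.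
have sPb := sP_bound s1 s2 P1 P2 (ltW he0) he1 hw.
have bw : 0 <= beta * w * e by rewrite !mulr_ge0 // ltW.
have nn : forall x, 0 <= x -> 0 <= x * e by move=> x hx; rewrite mulr_ge0 // ltW.
split => E; rewrite /C.
- have Id : - beta * sv * P + delta * rv + (8 * beta * w + delta + sigma + kappa + gamma) * e
     = beta * e * (P + 2*e*w) + 2 * (beta * w * e) * (1 - e) + 6 * (beta * w * e)
       + delta * (rv + e) + sigma * e + kappa * e + gamma * e by rewrite E; ring.
  have : 0 <= beta * e * (P + 2*e*w) by rewrite !mulr_ge0 //; lra.
  have : 0 <= 2 * (beta * w * e) * (1 - e) by rewrite !mulr_ge0 //; lra.
  have : 0 <= delta * (rv + e) by rewrite mulr_ge0 //; lra.
  have := nn _ hs; have := nn _ hk; have := nn _ hg.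
  lra.
- have Id : q * beta * sv * P - sigma * av - kappa * av + (8 * beta * w + delta + sigma + kappa + gamma) * e
     = q * beta * (sv * P + 8*w*e) + 8 * (beta * w * e) * (1 - q) + delta * e
       + 2 * (sigma * e) + 2 * (kappa * e) + gamma * e by rewrite E; ring.
  have : 0 <= q * beta * (sv * P + 8*w*e) by rewrite !mulr_ge0 //; lra.
  have : 0 <= 8 * (beta * w * e) * (1 - q) by rewrite !mulr_ge0 //; lra.
  have := nn _ hs; have := nn _ hk; have := nn _ hg; have := nn _ hd.
  lra.
- have Id : (1 - q) * beta * sv * P + sigma * av - gamma * pv + (8 * beta * w + delta + sigma + kappa + gamma) * e
     = (1 - q) * beta * (sv * P + 8*w*e) + 8 * q * (beta * w * e) + sigma * (av + e)
       + delta * e + kappa * e + 2 * (gamma * e) by rewrite E; ring.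
  have : 0 <= (1 - q) * beta * (sv * P + 8*w*e) by rewrite !mulr_ge0 //; lra.
  have : 0 <= 8 * q * (beta * w * e) by rewrite mulr_ge0 // mulr_ge0.
  have : 0 <= sigma * (av + e) by rewrite mulr_ge0 //; lra.
  have := nn _ hk; have := nn _ hg; have := nn _ hd.
  lra.
- have Id : kappa * av + gamma * pv - delta * rv + (8 * beta * w + delta + sigma + kappa + gamma) * e
     = kappa * (av + e) + gamma * (pv + e) + 8 * (beta * w * e) + 2 * (delta * e) + sigma * e
     by rewrite E; ring.
  have : 0 <= kappa * (av + e) by rewrite mulr_ge0 //; lra.
  have : 0 <= gamma * (pv + e) by rewrite mulr_ge0 //; lra.
  have := nn _ hs; have := nn _ hd.
  lra.
Qed.

Lemma pressure_bnd (R : realType) (n : nat) (W : 'I_n -> 'I_n -> R) (a p : 'I_n -> R -> R)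
  (i : 'I_n) (t e : R) :
  (forall i j, 0 <= W i j) -> (forall j, -e <= a j t) -> (forall j, a j t <= 4) ->
  (forall j, -e <= p j t) -> (forall j, p j t <= 4) ->
  -(2*e*(\sum_(j < n) W i j)) <= pressure W a p i t /\ pressure W a p i t <= 8 * (\sum_(j < n) W i j).
Proof.
move=> HW a1 a2 p1 p2; rewrite /pressure; split.
- rewrite mulr_sumr -sumrN; apply: ler_sum => j _.
  have : 0 <= W i j * (a j t + p j t + 2 * e).
    by apply: mulr_ge0 => //; have := a1 j; have := p1 j; lra.
  lra.
- rewrite mulr_sumr; apply: ler_sum => j _.
  have : 0 <= W i j * (8 - a j t - p j t).
    by apply: mulr_ge0 => //; have := a2 j; have := p2 j; lra.
  lra.
Qed.

End Helpers.

Theorem lemma1 (R : realType) (n : nat) (Hn : (0 < n)%N)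
  (beta gamma delta sigma kappa : 'I_n -> R) (W : 'I_n -> 'I_n -> R) (q : R)
  (s a p r : 'I_n -> R -> R)
  (Hbeta : forall i, 0 <= beta i) (Hgamma : forall i, 0 <= gamma i)
  (Hdelta : forall i, 0 <= delta i) (Hsigma : forall i, 0 <= sigma i)
  (Hkappa : forall i, 0 <= kappa i) (HW : forall i j, 0 <= W i j)
  (Hq0 : 0 <= q) (Hq1 : q <= 1)
  (Hs' : forall i (t : R), 0 <= t -> is_derive t 1 (s i)
     (- beta i * s i t * pressure W a p i t + delta i * r i t))
  (Ha' : forall i (t : R), 0 <= t -> is_derive t 1 (a i)
     (q * beta i * s i t * pressure W a p i t - sigma i * a i t - kappa i * a i t))
  (Hp' : forall i (t : R), 0 <= t -> is_derive t 1 (p i)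
     ((1 - q) * beta i * s i t * pressure W a p i t + sigma i * a i t - gamma i * p i t))
  (Hr' : forall i (t : R), 0 <= t -> is_derive t 1 (r i)
     (kappa i * a i t + gamma i * p i t - delta i * r i t))
  (H0 : forall i, [/\ 0 <= s i 0 <= 1, 0 <= a i 0 <= 1, 0 <= p i 0 <= 1
                   & 0 <= r i 0 <= 1])
  (Hsum0 : forall i, s i 0 + a i 0 + p i 0 + r i 0 = 1) :
  forall (t : R) i, 0 <= t ->
    [/\ 0 <= s i t <= 1, 0 <= a i t <= 1, 0 <= p i t <= 1, 0 <= r i t <= 1
      & s i t + a i t + p i t + r i t = 1].
Proof.
have Hsum : forall i t, 0 <= t -> s i t + a i t + p i t + r i t = 1.
  move=> i t t0.
  case: (ltrP 0 t) => tp; last first.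
    by have -> : t = 0 by apply/le_anti; rewrite tp t0.
  have D : forall u : R, 0 <= u -> is_derive u 1 (fun v => s i v + a i v + p i v + r i v) 0.
    move=> u u0.
    have H := is_deriveD (is_deriveD (is_deriveD (Hs' i u u0) (Ha' i u u0)) (Hp' i u u0)) (Hr' i u u0).
    apply: (is_derive_eq H); ring.
  pose f := fun v => s i v + a i v + p i v + r i v.
  have cont : forall u, 0 <= u -> {for u, continuous f}.
    move=> u u0; have [Dd _] := D u u0.
    exact/differentiable_continuous/derivable1_diffP.
  have Dio : forall x, x \in `]0, t[ -> is_derive x 1 f 0.
    by move=> x; rewrite in_itv /= => /andP[/ltW x0 _]; apply: D.
  have MV := MVT tp Dio.
  have C2 : {within `[0, t], continuous f}%classic.
    apply: continuous_in_subspaceT => u uin.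
    have u0 : 0 <= u by move: uin; rewrite inE /= in_itv /= => /andP[].
    exact: cont.
  have [c cin Hc] := MV C2.
  move: Hc; rewrite mul0r /f => /eqP; rewrite subr_eq0 => /eqP ->.
  exact: Hsum0.
have Hpos : forall T, 0 <= T -> forall i,
    [/\ 0 <= s i T, 0 <= a i T, 0 <= p i T & 0 <= r i T].
  move=> T T0.
  pose w i := \sum_(j < n) W i j.
  have w0 : forall i, 0 <= w i by move=> i; apply: sumr_ge0 => j _.
  pose Ci i := 8 * beta i * w i + delta i + sigma i + kappa i + gamma i.
  have Ci0 : forall i, 0 <= Ci i.
    move=> i; rewrite /Ci; have := Hbeta i; have := w0 i; have := Hdelta i.
    have := Hsigma i; have := Hkappa i; have := Hgamma i.
    have := mulr_ge0 (Hbeta i) (w0 i). nra.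
  pose C := \sum_(i < n) Ci i.
  have CiC : forall i, Ci i <= C.
    move=> i; rewrite /C (bigD1 i) //= lerDl; apply: sumr_ge0 => j _; exact: Ci0.
  pose M := C + 1.
  have M0 : 0 < M by rewrite /M; have := Ci0 (Ordinal Hn); have := CiC (Ordinal Hn); lra.
  pose X (c : 'I_4) i : R -> R := if val c == 0%N then s i else if val c == 1%N then a i
     else if val c == 2%N then p i else r i.
  pose DX (c : 'I_4) i (u : R) : R := if val c == 0%N then
        - beta i * s i u * pressure W a p i u + delta i * r i u
     else if val c == 1%N then
        q * beta i * s i u * pressure W a p i u - sigma i * a i u - kappa i * a i u
     else if val c == 2%N then
        (1 - q) * beta i * s i u * pressure W a p i u + sigma i * a i u - gamma i * p i u
     else kappa i * a i u + gamma i * p i u - delta i * r i u.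
  have HXd : forall c i (u : R), 0 <= u -> is_derive u 1 (X c i) (DX c i u).
    move=> c i u u0; rewrite /X /DX.
    case: ifP => _; first exact: Hs'.
    case: ifP => _; first exact: Ha'.
    case: ifP => _; first exact: Hp'.
    exact: Hr'.
  have X0 : forall c i, 0 <= X c i 0.
    move=> c i; have [/andP[? _] /andP[? _] /andP[? _] /andP[? _]] := H0 i.
    rewrite /X; by repeat case: ifP => _.
  have key : forall eps, 0 < eps -> eps * expR (M * T) <= 1 ->
      forall k (u : R), 0 <= u <= T -> 0 < X k.1 k.2 u + eps * expR (M * u).
    move=> eps eps0 epsT.
    apply: (barrier (f := fun k u => X k.1 k.2 u + eps * expR (M * u))) => //.
    - move=> k u /andP[u0 _].
      have [Dd _] := is_derive_pert eps M (HXd k.1 k.2 u u0).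
      exact/differentiable_continuous/derivable1_diffP.
    - move=> [c i] /=; rewrite mulr0 expR0 mulr1; have := X0 c i; lra.
    - move=> [c i] tau /andP[tau0 tauT] _ nneg fz /=.
      set e := eps * expR (M * tau).
      have e0 : 0 < e by rewrite /e mulr_gt0 // expR_gt0.
      have e1 : e <= 1.
        apply: le_trans epsT; rewrite /e ler_pM2l // ler_expR ler_pM2l //.
      have tau0' : 0 <= tau by apply: ltW.
      have lb : forall c' j, -e <= X c' j tau.
        by move=> c' j; have := nneg (c', j); rewrite /= -/e; lra.
      have ls : forall j, -e <= s j tau by move=> j; exact: (lb (Ordinal (isT : (0 < 4)%N)) j).
      have la : forall j, -e <= a j tau by move=> j; exact: (lb (Ordinal (isT : (1 < 4)%N)) j).
      have lp : forall j, -e <= p j tau by move=> j; exact: (lb (Ordinal (isT : (2 < 4)%N)) j).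
      have lr : forall j, -e <= r j tau by move=> j; exact: (lb (Ordinal (isT : (3 < 4)%N)) j).
      have us : forall j, s j tau <= 4.
        by move=> j; have := Hsum j tau tau0'; have := la j; have := lp j; have := lr j; lra.
      have ua : forall j, a j tau <= 4.
        by move=> j; have := Hsum j tau tau0'; have := ls j; have := lp j; have := lr j; lra.
      have up : forall j, p j tau <= 4.
        by move=> j; have := Hsum j tau tau0'; have := la j; have := ls j; have := lr j; lra.
      have ur : forall j, r j tau <= 4.
        by move=> j; have := Hsum j tau tau0'; have := la j; have := lp j; have := ls j; lra.
      have [P1 P2] := pressure_bnd i HW la ua lp up.
      have [cs ca cp cr] := comp_bound (Hbeta i) (Hgamma i) (Hdelta i) (Hsigma i) (Hkappa i)
        Hq0 Hq1 (w0 i) e0 e1 (ls i) (us i) (la i) (ua i) (lp i) (up i) (lr i) (ur i) P1 P2.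
      exists (DX c i tau + eps * (M * expR (M * tau))).
        exact: (is_derive_pert eps M (HXd c i tau tau0')).
      have fz' : X c i tau = - e by move: fz; rewrite /= -/e; lra.
      have DXb : -(Ci i * e) <= DX c i tau.
        move: fz'; rewrite /X /DX /Ci.
        case: ifP => _; first exact: cs.
        case: ifP => _; first exact: ca.
        case: ifP => _; first exact: cp.
        exact: cr.
      have EM : eps * (M * expR (M * tau)) = C * e + e by rewrite /e /M; ring.
      have : Ci i * e <= C * e by rewrite ler_pM2r.
      lra.
  have nonneg : forall c i, 0 <= X c i T.
    move=> c i; rewrite leNgt; apply/negP => xneg.
    set x := X c i T in xneg.
    pose m := Num.min 1 (- x / 2).
    have m0 : 0 < m by rewrite lt_min ltr01 /=; lra.
    pose eps := expR (-(M*T)) * m.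
    have E1 : eps * expR (M * T) = m by rewrite /eps mulrAC -expRD addNr expR0 mul1r.
    have TT : 0 <= T <= T by rewrite T0 lexx.
    have eps0 : 0 < eps by rewrite mulr_gt0 // expR_gt0.
    have := key eps eps0 _ (c, i) T TT.
    rewrite E1 ge_min lexx /= -/x => /(_ isT).
    have : m <= - x / 2 by rewrite ge_min lexx orbT.
    lra.
  move=> i; split.
  - exact: (nonneg (Ordinal (isT : (0 < 4)%N)) i).
  - exact: (nonneg (Ordinal (isT : (1 < 4)%N)) i).
  - exact: (nonneg (Ordinal (isT : (2 < 4)%N)) i).
  - exact: (nonneg (Ordinal (isT : (3 < 4)%N)) i).
move=> t i t0.
have [hs ha hp hr] := Hpos t t0 i.
have := Hsum i t t0 => hsum.
split; try (apply/andP; split); lra.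
Qed.
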